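(* For even $n\ge4$, let $\bar P_n$ denote the maximum of $\bar P(\mathsf{M}^{(1)},\mathsf{M}^{(2)})$ over all pairs of dichotomic measurements on the regular $n$-gon state space $\mathcal{S}_n$. Then, for every integer $m\ge1$: (i) if $n=4m$ with $m$ odd, $\bar P_n=\frac12\big(1+\frac{\sec(\pi/n)}{\sqrt2}\big)$; (ii) if $n=4m$ with $m$ even, $\bar P_n=\frac12\big(1+\frac{1}{\sqrt2}\big)$; (iii) if $n=4m+2$ with $m$ odd, $\bar P_n=\frac14\big[2+\sec(\pi/n)\cos(m\pi/n)+\sin(m\pi/n)\big]$; (iv) if $n=4m+2$ with $m$ even, $\bar P_n=\frac14\big[2+\cos(m\pi/n)+\sec(\pi/n)\sin(m\pi/n)\big]$.
   Context: The regular $n$-gon state space $\mathcal{S}_n\subset\mathbb{R}^3$ is the convex hull of $s_j=(r_n\cos(2j\pi/n),\,r_n\sin(2j\pi/n),\,1)^T$, $j=1,\ldots,n$, with $r_n=\sqrt{\sec(\pi/n)}$. Effects are linear functionals $e$ on $\mathbb{R}^3$ with $0\le e\le1$ on $\mathcal{S}_n$; unit effect $u=(0,0,1)$; $\|f\|=\max_{s\in\mathcal{S}_n}|f(s)|$. A dichotomic measurement is a pair of effects $\mathsf{M}_+,\mathsf{M}_-$ with $\mathsf{M}_++\mathsf{M}_-=u$, and $\bar P(\mathsf{M}^{(1)},\mathsf{M}^{(2)})=\frac18\sum_{x,y\in\{+,-\}}\|\mathsf{M}^{(1)}_x+\mathsf{M}^{(2)}_y\|$. *)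

(* Defs.v *)
From Stdlib Require Import Reals Lra.
From Coquelicot Require Import Coquelicot.
Open Scope R_scope.

(* Points of R^3 and linear functionals on R^3 (given by their coefficients). *)
Definition vec3 := (R * R * R)%type.
Definition func3 := (R * R * R)%type.

Definition app (f : func3) (x : vec3) : R :=
  let '(a, b, c) := f in let '(x1, x2, x3) := x in a * x1 + b * x2 + c * x3.

Definition fadd (f g : func3) : func3 :=
  let '(a, b, c) := f in let '(a', b', c') := g in (a + a', b + b', c + c').

Definition unit_eff : func3 := (0, 0, 1).

Fixpoint sumR (n : nat) (f : nat -> R) : R :=
  match n with O => 0 | S k => sumR k f + f k end.

Definition sec (x : R) : R := / cos x.
Definition r_n (n : nat) : R := sqrt (sec (PI / INR n)).

Definition vertex (n j : nat) : vec3 :=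
  (r_n n * cos (2 * INR j * PI / INR n), r_n n * sin (2 * INR j * PI / INR n), 1).

Definition inS (n : nat) (s : vec3) : Prop :=
  exists lam : nat -> R,
    (forall j, 0 <= lam j) /\
    sumR n (fun k => lam (S k)) = 1 /\
    s = (sumR n (fun k => lam (S k) * fst (fst (vertex n (S k)))),
         sumR n (fun k => lam (S k) * snd (fst (vertex n (S k)))),
         sumR n (fun k => lam (S k) * snd (vertex n (S k)))).

Definition is_effect (n : nat) (e : func3) : Prop :=
  forall s, inS n s -> 0 <= app e s <= 1.

(* ||f|| = max_{s in S_n} |f(s)|  (taken as the supremum, which is attained) *)
Definition fnorm (n : nat) (f : func3) : R :=
  real (Lub_Rbar (fun v => exists s, inS n s /\ v = Rabs (app f s))).

Definition dichotomic (n : nat) (M : func3 * func3) : Prop :=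
  is_effect n (fst M) /\ is_effect n (snd M) /\ fadd (fst M) (snd M) = unit_eff.

Definition Pbar (n : nat) (M1 M2 : func3 * func3) : R :=
  / 8 * (fnorm n (fadd (fst M1) (fst M2)) + fnorm n (fadd (fst M1) (snd M2))
       + fnorm n (fadd (snd M1) (fst M2)) + fnorm n (fadd (snd M1) (snd M2))).

Definition is_Pbar_max (n : nat) (v : R) : Prop :=
  (exists M1 M2, dichotomic n M1 /\ dichotomic n M2 /\ Pbar n M1 M2 = v) /\
  (forall M1 M2, dichotomic n M1 -> dichotomic n M2 -> Pbar n M1 M2 <= v).

(* Main.v *)
Require Import Defs.
From Stdlib Require Import Reals Arith Lra Lia ZArith.
From Coquelicot Require Import Coquelicot.
Open Scope R_scope.


Lemma sumR_ext n f g : (forall k, (k < n)%nat -> f k = g k) -> sumR n f = sumR n g.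
Proof. induction n; simpl; intros H; [reflexivity|]. rewrite IHn by (intros; apply H; lia). rewrite H by lia. reflexivity. Qed.

Lemma sumR_plus n f g : sumR n (fun k => f k + g k) = sumR n f + sumR n g.
Proof. induction n; simpl; [ring|]. rewrite IHn; ring. Qed.

Lemma sumR_scal n c f : sumR n (fun k => c * f k) = c * sumR n f.
Proof. induction n; simpl; [ring|]. rewrite IHn; ring. Qed.

Lemma sumR_le n f g : (forall k, (k < n)%nat -> f k <= g k) -> sumR n f <= sumR n g.
Proof. induction n; simpl; intros H; [lra|]. assert (f n <= g n) by (apply H; lia).
  assert (sumR n f <= sumR n g) by (apply IHn; intros; apply H; lia). lra. Qed.

Lemma sumR_zero n : sumR n (fun _ => 0) = 0.
Proof. induction n; simpl; [ring|]. rewrite IHn; ring. Qed.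

Lemma sumR_ind n j x : (1 <= j <= n)%nat ->
  sumR n (fun k => (if Nat.eqb (S k) j then 1 else 0) * x (S k)) = x j.
Proof.
  induction n; intros Hj; [lia|]. cbn [sumR].
  destruct (Nat.eq_dec j (S n)) as [->|Hne].
  - rewrite Nat.eqb_refl.
    rewrite (sumR_ext n _ (fun _ => 0)). rewrite sumR_zero. ring.
    intros k Hk. rewrite (proj2 (Nat.eqb_neq (S k) (S n))) by lia. ring.
  - destruct (Nat.eqb_spec (S n) j); [lia|]. rewrite IHn by lia. ring.
Qed.

Lemma vertex_inS n j : (1 <= j <= n)%nat -> inS n (vertex n j).
Proof.
  intros Hj. exists (fun k => if Nat.eqb k j then 1 else 0). split; [|split].
  - intros k. destruct (Nat.eqb k j); lra.
  - rewrite (sumR_ext n _ (fun k => (if Nat.eqb (S k) j then 1 else 0) * (fun _ => 1) (S k))).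
    apply (sumR_ind n j (fun _ => 1)); auto. intros; simpl; ring.
  - rewrite (sumR_ind n j (fun k => fst (fst (vertex n k)))) by auto.
    rewrite (sumR_ind n j (fun k => snd (fst (vertex n k)))) by auto.
    rewrite (sumR_ind n j (fun k => snd (vertex n k))) by auto.
    unfold vertex; simpl. reflexivity.
Qed.

Lemma app_inS n s : inS n s -> exists lam : nat -> R,
  (forall j, 0 <= lam j) /\ sumR n (fun k => lam (S k)) = 1 /\
  forall f, app f s = sumR n (fun k => lam (S k) * app f (vertex n (S k))).
Proof.
  intros [lam [H0 [H1 H2]]]. exists lam. split; [auto|split;[auto|]].
  intros [[a b] c]. rewrite H2. unfold app at 1.
  rewrite <- !sumR_scal, <- !sumR_plus. apply sumR_ext. intros k _.
  unfold vertex, app; simpl. ring.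
Qed.

Lemma convex_bound n s f lo hi : inS n s ->
  (forall j, (1 <= j <= n)%nat -> lo <= app f (vertex n j) <= hi) -> lo <= app f s <= hi.
Proof.
  intros Hs H. destruct (app_inS n s Hs) as [lam [H0 [H1 H2]]]. rewrite H2. split.
  - replace lo with (sumR n (fun k => lam (S k) * lo)) by (rewrite (sumR_ext n _ (fun k => lo * lam (S k))) by (intros; ring); rewrite sumR_scal, H1; ring).
    apply sumR_le. intros k Hk. apply Rmult_le_compat_l; [apply H0|]. apply H; lia.
  - replace hi with (sumR n (fun k => lam (S k) * hi)) by (rewrite (sumR_ext n _ (fun k => hi * lam (S k))) by (intros; ring); rewrite sumR_scal, H1; ring).
    apply sumR_le. intros k Hk. apply Rmult_le_compat_l; [apply H0|]. apply H; lia.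
Qed.

Lemma abs_bound n s f B : inS n s ->
  (forall j, (1 <= j <= n)%nat -> Rabs (app f (vertex n j)) <= B) -> Rabs (app f s) <= B.
Proof.
  intros Hs H. apply Rabs_le. apply (convex_bound n s f (-B) B Hs).
  intros j Hj. apply Rabs_le_between, H, Hj.
Qed.

Lemma fnorm_eq n f B : (forall s, inS n s -> Rabs (app f s) <= B) ->
  (exists s, inS n s /\ Rabs (app f s) = B) -> fnorm n f = B.
Proof.
  intros Hub [s0 [Hs0 He]]. unfold fnorm.
  destruct (Lub_Rbar_correct (fun v => exists s, inS n s /\ v = Rabs (app f s))) as [Hl1 Hl2].
  assert (A1 : Rbar_le (Finite B) (Lub_Rbar (fun v => exists s, inS n s /\ v = Rabs (app f s)))).
  { apply Hl1. exists s0. auto. }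
  assert (A2 : Rbar_le (Lub_Rbar (fun v => exists s, inS n s /\ v = Rabs (app f s))) (Finite B)).
  { apply Hl2. intros x [s [Hs ->]]. simpl. apply Hub, Hs. }
  destruct (Lub_Rbar _) as [l| |]; simpl in *; try contradiction. lra.
Qed.

Lemma fnorm_ge n f B s : (forall s, inS n s -> Rabs (app f s) <= B) -> inS n s ->
  Rabs (app f s) <= fnorm n f.
Proof.
  intros Hub Hs. unfold fnorm.
  destruct (Lub_Rbar_correct (fun v => exists s, inS n s /\ v = Rabs (app f s))) as [Hl1 Hl2].
  assert (A1 : Rbar_le (Finite (Rabs (app f s))) (Lub_Rbar (fun v => exists s, inS n s /\ v = Rabs (app f s)))).
  { apply Hl1. exists s. auto. }
  assert (A2 : Rbar_le (Lub_Rbar (fun v => exists s, inS n s /\ v = Rabs (app f s))) (Finite B)).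
  { apply Hl2. intros x [s' [Hs' ->]]. simpl. apply Hub, Hs'. }
  destruct (Lub_Rbar _) as [l| |]; simpl in *; try contradiction. lra.
Qed.

Fixpoint vmax n f k := match k with O => 0 | S k => Rmax (vmax n f k) (Rabs (app f (vertex n (S k)))) end.

Lemma vmax_ge n f k j : (1 <= j <= k)%nat -> Rabs (app f (vertex n j)) <= vmax n f k.
Proof.
  induction k; intros Hj; [lia|]. simpl. destruct (Nat.eq_dec j (S k)) as [->|].
  - apply Rmax_r.
  - eapply Rle_trans; [apply IHk; lia|apply Rmax_l].
Qed.

Lemma vmax_att n f k : (1 <= k)%nat -> exists j, (1 <= j <= k)%nat /\ vmax n f k = Rabs (app f (vertex n j)).
Proof.
  induction k; intros Hk; [lia|]. simpl. destruct (Nat.eq_dec k 0) as [->|Hk0].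
  - exists 1%nat. split; [lia|]. simpl. apply Rmax_right. apply Rabs_pos.
  - destruct IHk as [j [Hj Hv]]; [lia|]. unfold Rmax. destruct (Rle_dec _ _).
    + exists (S k). split; [lia|auto].
    + exists j. split; [lia|auto].
Qed.

Lemma fnorm_vertex n f : (1 <= n)%nat -> exists j, (1 <= j <= n)%nat /\ fnorm n f = Rabs (app f (vertex n j)).
Proof.
  intros Hn. destruct (vmax_att n f n Hn) as [j [Hj Hv]]. exists j. split; auto.
  apply fnorm_eq.
  - intros s Hs. apply (abs_bound n); auto. intros j' Hj'. rewrite <- Hv. apply vmax_ge; auto.
  - exists (vertex n j). split; auto. apply vertex_inS; auto.
Qed.

Lemma effect_of_vertices n e : (forall j, (1 <= j <= n)%nat -> 0 <= app e (vertex n j) <= 1) -> is_effect n e.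
Proof. intros H s Hs. apply (convex_bound n s e 0 1 Hs H). Qed.


Lemma IZR_cases k : exists m : nat, IZR k = INR m \/ IZR k = - INR m.
Proof.
  exists (Z.abs_nat k). rewrite INR_IZR_INZ, Nat2Z.inj_abs_nat.
  destruct (Z.le_ge_cases 0 k).
  - left. rewrite Z.abs_eq; auto.
  - right. rewrite Z.abs_neq by lia. rewrite opp_IZR. ring.
Qed.

Lemma abs_cos_npi x m : Rabs (cos (x + INR m * PI)) = Rabs (cos x).
Proof.
  induction m. simpl. rewrite Rmult_0_l, Rplus_0_r. reflexivity.
  rewrite S_INR. replace (x + (INR m + 1) * PI) with ((x + INR m * PI) + PI) by ring.
  rewrite neg_cos, Rabs_Ropp. auto.
Qed.

Lemma abs_sin_npi x m : Rabs (sin (x + INR m * PI)) = Rabs (sin x).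
Proof.
  induction m. simpl. rewrite Rmult_0_l, Rplus_0_r. reflexivity.
  rewrite S_INR. replace (x + (INR m + 1) * PI) with ((x + INR m * PI) + PI) by ring.
  rewrite neg_sin, Rabs_Ropp. auto.
Qed.

Lemma abs_cos_kpi x k : Rabs (cos (x + IZR k * PI)) = Rabs (cos x).
Proof.
  destruct (IZR_cases k) as [m [-> | ->]]. apply abs_cos_npi.
  rewrite <- (abs_cos_npi (x + - INR m * PI) m). f_equal. f_equal. ring.
Qed.

Lemma abs_sin_kpi x k : Rabs (sin (x + IZR k * PI)) = Rabs (sin x).
Proof.
  destruct (IZR_cases k) as [m [-> | ->]]. apply abs_sin_npi.
  rewrite <- (abs_sin_npi (x + - INR m * PI) m). f_equal. f_equal. ring.
Qed.

Lemma cos_2kpi x k : cos (x + 2 * IZR k * PI) = cos x.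
Proof.
  destruct (IZR_cases k) as [m [-> | ->]]. apply cos_period.
  rewrite <- (cos_period (x + 2 * - INR m * PI) m). f_equal. ring.
Qed.

Lemma sin_2kpi x k : sin (x + 2 * IZR k * PI) = sin x.
Proof.
  destruct (IZR_cases k) as [m [-> | ->]]. apply sin_period.
  rewrite <- (sin_period (x + 2 * - INR m * PI) m). f_equal. ring.
Qed.

Definition ang (n : nat) (t : Z) : R := 2 * IZR t * PI / INR n.

Lemma vert_rep0 n t : (1 <= n)%nat -> exists j k, (1 <= j <= n)%nat /\
  ang n t = 2 * INR j * PI / INR n + 2 * IZR k * PI.
Proof.
  intros Hn. assert (Hnz : (0 < Z.of_nat n)%Z) by lia.
  assert (HN : 0 < INR n) by (apply lt_0_INR; lia).
  pose proof (Z.div_mod t (Z.of_nat n) ltac:(lia)) as Hd.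
  pose proof (Z.mod_pos_bound t (Z.of_nat n) Hnz) as Hb.
  set (q := (t / Z.of_nat n)%Z) in *. set (t0 := (t mod Z.of_nat n)%Z) in *.
  assert (Ht : IZR t = INR n * IZR q + IZR t0).
  { rewrite Hd at 1. rewrite plus_IZR, mult_IZR, <- INR_IZR_INZ. reflexivity. }
  unfold ang. rewrite Ht.
  destruct (Z.eq_dec t0 0) as [E|E].
  - exists n, (q - 1)%Z. split; [lia|]. rewrite E, minus_IZR. field. lra.
  - exists (Z.to_nat t0), q. split; [lia|]. rewrite (INR_IZR_INZ (Z.to_nat t0)), Z2Nat.id by lia. field. lra.
Qed.

Lemma vert_rep n t : (1 <= n)%nat -> exists j, (1 <= j <= n)%nat /\
  cos (2 * INR j * PI / INR n) = cos (ang n t) /\ sin (2 * INR j * PI / INR n) = sin (ang n t).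
Proof.
  intros Hn. destruct (vert_rep0 n t Hn) as [j [k [Hj E]]]. exists j. rewrite E.
  rewrite cos_2kpi, sin_2kpi. auto.
Qed.

Lemma ang_shift n h t : INR n = 2 * INR h -> 0 < INR n ->
  ang n (t + Z.of_nat h) = ang n t + PI.
Proof. intros Hn H0. unfold ang. rewrite plus_IZR, <- INR_IZR_INZ.
  assert (INR h <> 0) by lra. rewrite Hn. field. auto. Qed.

Definition Dv p q x := p * cos x + q * sin x.

Lemma Dv_pi p q x : Dv p q (x + PI) = - Dv p q x.
Proof. unfold Dv. rewrite neg_cos, neg_sin. ring. Qed.

Lemma D_sum p q a b : Dv p q a + Dv p q b = 2 * cos ((a - b) / 2) * Dv p q ((a + b) / 2).
Proof.
  unfold Dv. replace (p * cos a + q * sin a + (p * cos b + q * sin b)) with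
    (p * (cos a + cos b) + q * (sin a + sin b)) by ring.
  rewrite form1, form3. ring.
Qed.

Lemma eff_D n h a b c : (1 <= n)%nat -> INR n = 2 * INR h -> is_effect n (a, b, c) ->
  forall t, Dv (2 * r_n n * a) (2 * r_n n * b) (ang n t) <= 1.
Proof.
  intros Hn Hh He t. assert (HN : 0 < INR n) by (apply lt_0_INR; lia).
  destruct (vert_rep n t Hn) as [j [Hj [Ec Es]]].
  destruct (vert_rep n (t + Z.of_nat h) Hn) as [j' [Hj' [Ec' Es']]].
  rewrite ang_shift in Ec', Es' by auto. rewrite neg_cos in Ec'. rewrite neg_sin in Es'.
  pose proof (He _ (vertex_inS n j Hj)) as H1.
  pose proof (He _ (vertex_inS n j' Hj')) as H2.
  unfold app, vertex in H1, H2. rewrite Ec, Es in H1. rewrite Ec', Es' in H2.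
  unfold Dv. nra.
Qed.

Definition sg (n : nat) (t : Z) : R := if Z.even t then 1 else sec (PI / INR n).

Lemma pairbound n h p q : INR n = 2 * INR h -> 0 < INR n -> 0 < cos (PI / INR n) ->
  (forall t, Dv p q (ang n t) <= 1) -> forall i j,
  Dv p q (ang n i) + Dv p q (ang n j) <= 2 * Rabs (cos (IZR (i - j) * PI / INR n)) * sg n (i + j).
Proof.
  intros Hh HN Hc HD i j. rewrite D_sum.
  replace ((ang n i - ang n j) / 2) with (IZR (i - j) * PI / INR n)
    by (unfold ang; rewrite minus_IZR; field; lra).
  replace ((ang n i + ang n j) / 2) with (IZR (i + j) * PI / INR n)
    by (unfold ang; rewrite plus_IZR; field; lra).
  set (K := cos (IZR (i - j) * PI / INR n)).
  set (z := Dv p q (IZR (i + j) * PI / INR n)).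
  assert (Hz : Rabs z <= sg n (i + j)).
  { unfold sg. destruct (Z.Even_or_Odd (i + j)) as [[c Ec] | [c Ec]].
    - rewrite Ec. rewrite Z.even_mul. simpl.
      assert (Ez : z = Dv p q (ang n c)) by (unfold z, ang; rewrite Ec, mult_IZR; f_equal; simpl; field; lra).
      pose proof (HD c). pose proof (HD (c + Z.of_nat h)%Z) as H2.
      rewrite ang_shift, Dv_pi in H2 by auto. apply Rabs_le. lra.
    - rewrite Ec. rewrite Z.even_odd.
      pose proof (D_sum p q (ang n c) (ang n (c + 1))) as E.
      replace ((ang n c - ang n (c + 1)) / 2) with (- (PI / INR n)) in E
        by (unfold ang; rewrite plus_IZR; field; lra).
      replace ((ang n c + ang n (c + 1)) / 2) with (IZR (i + j) * PI / INR n) in E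
        by (unfold ang; rewrite Ec, !plus_IZR, mult_IZR; simpl; field; lra).
      rewrite cos_neg in E. fold z in E.
      pose proof (HD c) as A1. pose proof (HD (c + 1)%Z) as A2.
      pose proof (HD (c + Z.of_nat h)%Z) as A3. pose proof (HD (c + 1 + Z.of_nat h)%Z) as A4.
      rewrite ang_shift, Dv_pi in A3, A4 by auto.
      unfold sec. apply Rabs_le. split.
      + apply (Rmult_le_reg_l (cos (PI / INR n))); auto.
        replace (cos (PI / INR n) * - / cos (PI / INR n)) with (-1) by (field; lra). nra.
      + apply (Rmult_le_reg_l (cos (PI / INR n))); auto.
        rewrite Rinv_r by lra. nra. }
  assert (Hsg : 0 <= sg n (i + j)) by (unfold sg, sec; destruct (Z.even _); [lra| left; apply Rinv_0_lt_compat; auto]).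
  assert (2 * K * z <= 2 * Rabs K * Rabs z).
  { rewrite Rmult_assoc, (Rmult_assoc 2). apply Rmult_le_compat_l; [lra|].
    rewrite <- Rabs_mult. apply Rle_abs. }
  assert (Rabs K * Rabs z <= Rabs K * sg n (i + j)) by (apply Rmult_le_compat_l; auto; apply Rabs_pos).
  lra.
Qed.


Definition Gf n h t := Rabs (cos (IZR t * PI / INR n)) * sg n t
  + Rabs (sin (IZR t * PI / INR n)) * sg n (t + Z.of_nat h).

Lemma sg_shift2 n t k : sg n (t + 2 * k) = sg n t.
Proof. unfold sg. rewrite Z.even_add_mul_2. reflexivity. Qed.

Lemma Fbound n h p1 q1 p2 q2 : INR n = 2 * INR h -> 0 < INR n -> 0 < cos (PI / INR n) ->
  (forall t, Dv p1 q1 (ang n t) <= 1) -> (forall t, Dv p2 q2 (ang n t) <= 1) -> forall i j,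
  Dv p1 q1 (ang n i) + Dv p1 q1 (ang n j) + Dv p2 q2 (ang n i) + Dv p2 q2 (ang n (j + Z.of_nat h))
  <= 2 * Gf n h (i - j).
Proof.
  intros Hh HN Hc H1 H2 i j.
  pose proof (pairbound n h p1 q1 Hh HN Hc H1 i j) as A.
  pose proof (pairbound n h p2 q2 Hh HN Hc H2 i (j + Z.of_nat h)) as B.
  replace (IZR (i - (j + Z.of_nat h)) * PI / INR n) with (- (PI / 2 - IZR (i - j) * PI / INR n)) in B
    by (rewrite !minus_IZR, plus_IZR, <- INR_IZR_INZ; rewrite Hh; field; lra).
  rewrite cos_neg, cos_shift in B.
  replace (i + j)%Z with (i - j + 2 * j)%Z in A by lia. rewrite sg_shift2 in A.
  replace (i + (j + Z.of_nat h))%Z with (i - j + Z.of_nat h + 2 * j)%Z in B by lia. rewrite sg_shift2 in B.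
  unfold Gf. lra.
Qed.

Lemma app_fadd f g x : app (fadd f g) x = app f x + app g x.
Proof. destruct f as [[a b] c], g as [[a' b'] c'], x as [[x y] z]. simpl. ring. Qed.

Lemma app_vertex a b c n j : app (a, b, c) (vertex n j) =
  c + / 2 * Dv (2 * r_n n * a) (2 * r_n n * b) (ang n (Z.of_nat j)).
Proof. unfold ang. rewrite <- INR_IZR_INZ. unfold app, vertex, Dv. field. Qed.

Lemma Dv_opp p q x : Dv (- p) (- q) x = - Dv p q x.
Proof. unfold Dv. ring. Qed.

Lemma INR4 n : (4 <= n)%nat -> 4 <= INR n.
Proof. intros H. replace 4 with (INR 4) by (simpl; ring). apply le_INR; auto. Qed.

Lemma PIn_bounds n : (4 <= n)%nat -> 0 < PI / INR n <= PI / 4.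
Proof. intros H. pose proof (INR4 n H). pose proof PI_RGT_0. split.
  apply Rdiv_lt_0_compat; lra.
  unfold Rdiv; apply Rmult_le_compat_l; [lra| apply Rinv_le_contravar; lra]. Qed.

Lemma cos_pos_n n : (4 <= n)%nat -> 0 < cos (PI / INR n).
Proof. intros H. pose proof (PIn_bounds n H). pose proof PI_RGT_0. apply cos_gt_0; lra. Qed.

Lemma upper n h Gmax : (4 <= n)%nat -> n = (2 * h)%nat -> (forall t, Gf n h t <= Gmax) ->
  forall M1 M2, dichotomic n M1 -> dichotomic n M2 -> Pbar n M1 M2 <= / 2 + Gmax / 4.
Proof.
  intros Hn4 Hnh HG M1 M2 HM1 HM2.
  assert (HN : 0 < INR n) by (apply lt_0_INR; lia).
  assert (Hh : INR n = 2 * INR h) by (rewrite Hnh, mult_INR; simpl; ring).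
  assert (Hc : 0 < cos (PI / INR n)) by (apply cos_pos_n; auto).
  destruct M1 as [[[a1 b1] c1] [[a1' b1'] c1']], M2 as [[[a2 b2] c2] [[a2' b2'] c2']].
  destruct HM1 as [E1 [E1' F1]], HM2 as [E2 [E2' F2]]. simpl in E1, E1', E2, E2', F1, F2.
  unfold fadd, unit_eff in F1, F2. injection F1 as Fa1 Fb1 Fc1. injection F2 as Fa2 Fb2 Fc2.
  assert (D1 := eff_D n h a1 b1 c1 ltac:(lia) Hh E1).
  assert (D2 := eff_D n h a2 b2 c2 ltac:(lia) Hh E2).
  pose proof (Fbound n h _ _ _ _ Hh HN Hc D1 D2) as FB.
  unfold Pbar; simpl fst; simpl snd.
  destruct (fnorm_vertex n (fadd (a1, b1, c1) (a2, b2, c2)) ltac:(lia)) as [ja [Hja ->]].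
  destruct (fnorm_vertex n (fadd (a1, b1, c1) (a2', b2', c2')) ltac:(lia)) as [jb [Hjb ->]].
  destruct (fnorm_vertex n (fadd (a1', b1', c1') (a2, b2, c2)) ltac:(lia)) as [jc [Hjc ->]].
  destruct (fnorm_vertex n (fadd (a1', b1', c1') (a2', b2', c2')) ltac:(lia)) as [jd [Hjd ->]].
  rewrite !app_fadd.
  pose proof (E1 _ (vertex_inS n ja Hja)). pose proof (E2 _ (vertex_inS n ja Hja)).
  pose proof (E1 _ (vertex_inS n jb Hjb)). pose proof (E2' _ (vertex_inS n jb Hjb)).
  pose proof (E1' _ (vertex_inS n jc Hjc)). pose proof (E2 _ (vertex_inS n jc Hjc)).
  pose proof (E1' _ (vertex_inS n jd Hjd)). pose proof (E2' _ (vertex_inS n jd Hjd)).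
  rewrite !Rabs_pos_eq by lra.
  replace a1' with (- a1) by lra. replace b1' with (- b1) by lra. replace c1' with (1 - c1) by lra.
  replace a2' with (- a2) by lra. replace b2' with (- b2) by lra. replace c2' with (1 - c2) by lra.
  rewrite !app_vertex.
  replace (2 * r_n n * - a1) with (- (2 * r_n n * a1)) by ring.
  replace (2 * r_n n * - b1) with (- (2 * r_n n * b1)) by ring.
  replace (2 * r_n n * - a2) with (- (2 * r_n n * a2)) by ring.
  replace (2 * r_n n * - b2) with (- (2 * r_n n * b2)) by ring.
  rewrite !Dv_opp.
  set (P1 := 2 * r_n n * a1) in *. set (Q1 := 2 * r_n n * b1) in *.
  set (P2 := 2 * r_n n * a2) in *. set (Q2 := 2 * r_n n * b2) in *.
  pose proof (FB (Z.of_nat ja) (Z.of_nat jb)) as X1.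
  pose proof (FB (Z.of_nat jd + Z.of_nat h)%Z (Z.of_nat jc + Z.of_nat h)%Z) as X2.
  rewrite !ang_shift, !Dv_pi in X1 by auto.
  rewrite !ang_shift, !Dv_pi in X2 by auto.
  pose proof (HG (Z.of_nat ja - Z.of_nat jb)%Z).
  pose proof (HG (Z.of_nat jd + Z.of_nat h - (Z.of_nat jc + Z.of_nat h))%Z).
  lra.
Qed.


Lemma G_perk n h t q : n = (2 * h)%nat -> (0 < n)%nat ->
  Gf n h (t + Z.of_nat n * q) = Gf n h t.
Proof.
  intros Hnh Hn. assert (HN : 0 < INR n) by (apply lt_0_INR; lia).
  unfold Gf.
  replace (IZR (t + Z.of_nat n * q) * PI / INR n) with (IZR t * PI / INR n + IZR q * PI)
    by (rewrite plus_IZR, mult_IZR, <- INR_IZR_INZ; field; lra).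
  rewrite abs_cos_kpi, abs_sin_kpi.
  replace (t + Z.of_nat n * q)%Z with (t + 2 * (Z.of_nat h * q))%Z by lia.
  replace (t + 2 * (Z.of_nat h * q) + Z.of_nat h)%Z with (t + Z.of_nat h + 2 * (Z.of_nat h * q))%Z by lia.
  rewrite !sg_shift2. reflexivity.
Qed.

Lemma G_neg n h t : Gf n h (- t) = Gf n h t.
Proof.
  unfold Gf. rewrite opp_IZR.
  replace (- IZR t * PI / INR n) with (- (IZR t * PI / INR n)) by (unfold Rdiv; ring).
  rewrite cos_neg, sin_neg, Rabs_Ropp.
  replace (- t)%Z with (t + 2 * (- t))%Z at 1 by lia.
  replace (- t + Z.of_nat h)%Z with (t + Z.of_nat h + 2 * (- t))%Z by lia.
  rewrite !sg_shift2. reflexivity.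
Qed.

Lemma G_refl n h t : n = (2 * h)%nat -> (0 < n)%nat -> Gf n h (Z.of_nat h - t) = Gf n h t.
Proof.
  intros Hnh Hn. assert (HN : 0 < INR n) by (apply lt_0_INR; lia).
  assert (Hh : INR n = 2 * INR h) by (rewrite Hnh, mult_INR; simpl; ring).
  unfold Gf.
  replace (IZR (Z.of_nat h - t) * PI / INR n) with (PI / 2 - IZR t * PI / INR n)
    by (rewrite minus_IZR, <- INR_IZR_INZ, Hh; field; lra).
  rewrite cos_shift, sin_shift.
  replace (Z.of_nat h - t)%Z with (t + Z.of_nat h + 2 * (- t))%Z by lia.
  replace (t + Z.of_nat h + 2 * - t + Z.of_nat h)%Z with (t + 2 * (Z.of_nat h - t))%Z by lia.
  rewrite !sg_shift2. ring.
Qed.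

Lemma G_reduce n h t : n = (2 * h)%nat -> (0 < n)%nat ->
  exists t', (0 <= t')%Z /\ (4 * t' <= Z.of_nat n)%Z /\ Gf n h t = Gf n h t'.
Proof.
  intros Hnh Hn. assert (Hnz : (0 < Z.of_nat n)%Z) by lia.
  pose proof (Z.div_mod t (Z.of_nat n) ltac:(lia)) as Hd.
  pose proof (Z.mod_pos_bound t (Z.of_nat n) Hnz) as Hb.
  set (q := (t / Z.of_nat n)%Z) in *. set (t0 := (t mod Z.of_nat n)%Z) in *.
  assert (E0 : Gf n h t = Gf n h t0).
  { rewrite Hd. replace (Z.of_nat n * q + t0)%Z with (t0 + Z.of_nat n * q)%Z by lia.
    apply G_perk; auto. }
  assert (E1 : exists t1, (0 <= t1 <= Z.of_nat h)%Z /\ Gf n h t = Gf n h t1).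
  { destruct (Z.le_gt_cases (2 * t0) (Z.of_nat n)).
    - exists t0. split; [lia|auto].
    - exists (Z.of_nat n - t0)%Z. split; [lia|].
      replace (Z.of_nat n - t0)%Z with (- t0 + Z.of_nat n * 1)%Z by lia.
      rewrite G_perk, G_neg; auto. }
  destruct E1 as [t1 [Hb1 E1]].
  destruct (Z.le_gt_cases (4 * t1) (Z.of_nat n)).
  - exists t1. split; [lia|split; [lia|auto]].
  - exists (Z.of_nat h - t1)%Z. split; [lia|split; [lia|]]. rewrite G_refl; auto.
Qed.

Lemma sec_ge1 n : (4 <= n)%nat -> 1 <= sec (PI / INR n).
Proof.
  intros H. pose proof (cos_pos_n n H). pose proof (COS_bound (PI / INR n)).
  unfold sec. apply Rmult_le_reg_l with (cos (PI / INR n)); auto.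
  rewrite Rinv_r by lra. lra.
Qed.

Lemma cs_sqrt2 c s : 0 <= c -> 0 <= s -> c * c + s * s = 1 -> c + s <= sqrt 2.
Proof.
  intros. pose proof (sqrt_sqrt 2 ltac:(lra)). pose proof (sqrt_pos 2).
  assert ((c + s) * (c + s) <= 2) by (pose proof (Rle_0_sqr (c - s)); unfold Rsqr in *; nra).
  destruct (Rle_or_lt (c + s) (sqrt 2)); auto. nra.
Qed.

Lemma x_bounds n t : (4 <= n)%nat -> (0 <= t)%Z -> (4 * t <= Z.of_nat n)%Z ->
  0 <= IZR t * PI / INR n <= PI / 4.
Proof.
  intros Hn H0 H1. pose proof (INR4 n Hn). pose proof PI_RGT_0.
  assert (0 <= IZR t) by (apply IZR_le; auto).
  assert (4 * IZR t <= INR n) by (rewrite INR_IZR_INZ; replace 4 with (IZR 4) by reflexivity; rewrite <- mult_IZR; apply IZR_le; auto).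
  split. apply Rmult_le_pos; [nra|]. left; apply Rinv_0_lt_compat; lra.
  apply Rmult_le_reg_r with (INR n); [lra|]. unfold Rdiv. rewrite Rmult_assoc, Rinv_l by lra. nra.
Qed.

Lemma Gmax_4m_odd n m : n = (4 * m)%nat -> Nat.Odd m -> (1 <= m)%nat ->
  forall t, Gf n (2 * m) t <= sqrt 2 * sec (PI / INR n).
Proof.
  intros Hnm Hm Hm1 t.
  destruct (G_reduce n (2 * m) t ltac:(lia) ltac:(lia)) as [t' [H0 [H1 ->]]].
  pose proof (x_bounds n t' ltac:(lia) H0 H1) as Hx. pose proof PI_RGT_0.
  set (x := IZR t' * PI / INR n) in *.
  assert (0 <= cos x) by (apply cos_ge_0; lra). assert (0 <= sin x) by (apply sin_ge_0; lra).
  pose proof (sin2_cos2 x). unfold Rsqr in *.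
  pose proof (cs_sqrt2 (cos x) (sin x) ltac:(auto) ltac:(auto) ltac:(lra)).
  pose proof (sec_ge1 n ltac:(lia)).
  unfold Gf. fold x. rewrite !Rabs_pos_eq by auto.
  replace (t' + Z.of_nat (2 * m))%Z with (t' + 2 * Z.of_nat m)%Z by lia. rewrite sg_shift2.
  assert (Hs : 1 <= sg n t' <= sec (PI / INR n)) by (unfold sg; destruct (Z.even t'); lra).
  pose proof (sqrt_pos 2). nra.
Qed.

Lemma Gmax_4m_even n m : n = (4 * m)%nat -> Nat.Even m -> (1 <= m)%nat ->
  forall t, Gf n (2 * m) t <= sqrt 2.
Proof.
  intros Hnm Hm Hm1 t.
  destruct (G_reduce n (2 * m) t ltac:(lia) ltac:(lia)) as [t' [H0 [H1 ->]]].
  pose proof (x_bounds n t' ltac:(lia) H0 H1) as Hx. pose proof PI_RGT_0.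
  set (x := IZR t' * PI / INR n) in *.
  assert (0 <= cos x) by (apply cos_ge_0; lra). assert (0 <= sin x) by (apply sin_ge_0; lra).
  pose proof (sin2_cos2 x). unfold Rsqr in *.
  pose proof (cs_sqrt2 (cos x) (sin x) ltac:(auto) ltac:(auto) ltac:(lra)).
  unfold Gf. fold x. rewrite !Rabs_pos_eq by auto.
  replace (t' + Z.of_nat (2 * m))%Z with (t' + 2 * Z.of_nat m)%Z by lia. rewrite sg_shift2.
  unfold sg. destruct (Z.even t') eqn:Et; [lra|].
  (* t' odd, so t' <= m - 1 *)
  assert (Ht : (t' <= Z.of_nat m - 1)%Z).
  { destruct Hm as [k Hk]. assert (t' <> Z.of_nat m).
    { intros E. rewrite E, Hk, Nat2Z.inj_mul in Et. rewrite Z.even_mul in Et. simpl in Et. discriminate. }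
    lia. }
  assert (HN : INR n = 4 * INR m) by (rewrite Hnm, mult_INR; simpl; ring).
  assert (HNp : 0 < INR n) by (pose proof (INR4 n ltac:(lia)); lra).
  assert (Hxm : x <= PI / 4 - PI / INR n).
  { unfold x. assert (IZR t' <= INR m - 1).
    { rewrite INR_IZR_INZ. replace 1 with (IZR 1) by reflexivity. rewrite <- minus_IZR. apply IZR_le; auto. }
    apply Rmult_le_reg_r with (INR n); [lra|]. unfold Rdiv.
    replace ((PI * / 4 - PI * / INR n) * INR n) with (PI * (INR m - 1)) by (rewrite HN; field; lra).
    rewrite Rmult_assoc, Rinv_l by lra. nra. }
  assert (Ecs : cos x + sin x = sqrt 2 * cos (PI / 4 - x)).
  { rewrite cos_minus, cos_PI4, sin_PI4. pose proof (sqrt_sqrt 2 ltac:(lra)).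
    pose proof (sqrt_lt_R0 2 ltac:(lra)). field. lra. }
  assert (cos (PI / 4 - x) <= cos (PI / INR n)).
  { pose proof (PIn_bounds n ltac:(lia)). apply cos_decr_1; lra. }
  pose proof (cos_pos_n n ltac:(lia)). pose proof (sqrt_pos 2).
  replace (cos x * sec (PI / INR n) + sin x * sec (PI / INR n)) with ((cos x + sin x) * sec (PI / INR n)) by ring.
  rewrite Ecs. unfold sec.
  apply Rle_trans with (sqrt 2 * cos (PI / INR n) * / cos (PI / INR n)).
  - apply Rmult_le_compat_r. left; apply Rinv_0_lt_compat; auto. nra.
  - right. field. lra.
Qed.


Lemma diff_cs x y : let c := (x + y) / 2 in let d := (y - x) / 2 in
  cos y - cos x = -2 * sin d * sin c /\ sin y - sin x = 2 * cos c * sin d.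
Proof.
  simpl. rewrite form2, form4, (Rplus_comm y x). split; reflexivity.
Qed.

Lemma mono1 n m x y : INR n = 4 * INR m + 2 -> (4 <= n)%nat -> 0 <= x -> x <= y ->
  x + y <= 2 * INR m * PI / INR n ->
  sec (PI / INR n) * cos x + sin x <= sec (PI / INR n) * cos y + sin y.
Proof.
  intros HN Hn H0 H1 H2. pose proof PI_RGT_0. pose proof (PIn_bounds n Hn) as Hb.
  pose proof (cos_pos_n n Hn) as Hc.
  assert (HNp : 0 < INR n) by (pose proof (INR4 n Hn); lra).
  assert (Hpi2 : 2 * INR m * PI / INR n + PI / INR n = PI / 2) by (rewrite HN; field; lra).
  assert (Hmn : 0 <= 2 * INR m * PI / INR n).
  { unfold Rdiv. apply Rmult_le_pos; [|left; apply Rinv_0_lt_compat; lra].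
    pose proof (pos_INR m). nra. }
  destruct (diff_cs x y) as [A B]. set (c := (x + y) / 2) in *. set (d := (y - x) / 2) in *.
  set (e := PI / INR n) in *.
  assert (Hce : sin c <= cos e * cos c).
  { assert (E1 : cos (c + e) + cos (c - e) = 2 * cos c * cos e) by (rewrite cos_plus, cos_minus; ring).
    assert (E2 : cos (PI / 2 - c) = sin c) by apply cos_shift.
    assert (X1 : cos (PI / 2 - c) <= cos (c + e)) by (apply cos_decr_1; unfold c in *; lra).
    assert (X2 : cos (c + e) <= cos (c - e)).
    { destruct (Rle_or_lt e c).
      - apply cos_decr_1; unfold c in *; lra.
      - replace (c - e) with (- (e - c)) by ring. rewrite cos_neg. apply cos_decr_1; unfold c in *; lra. }
    lra. }
  assert (Hd : 0 <= sin d) by (apply sin_ge_0; unfold d, c in *; lra).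
  assert (Hs : sec e * sin c <= cos c).
  { unfold sec. apply Rmult_le_reg_l with (cos e); auto.
    rewrite <- Rmult_assoc, Rinv_r by lra. lra. }
  assert (0 <= 2 * sin d * (cos c - sec e * sin c)) by (apply Rmult_le_pos; lra).
  nra.
Qed.

Lemma mono2 n x y : (4 <= n)%nat -> 0 <= x -> x <= y -> x + y <= PI / 2 ->
  cos x + sec (PI / INR n) * sin x <= cos y + sec (PI / INR n) * sin y.
Proof.
  intros Hn H0 H1 H2. pose proof PI_RGT_0. pose proof (sec_ge1 n Hn) as Hs1.
  destruct (diff_cs x y) as [A B]. set (c := (x + y) / 2) in *. set (d := (y - x) / 2) in *.
  assert (Hcc : sin c <= cos c).
  { rewrite <- cos_shift. apply cos_decr_1; unfold c in *; lra. }
  assert (0 <= cos c) by (apply cos_ge_0; unfold c in *; lra).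
  assert (Hd : 0 <= sin d) by (apply sin_ge_0; unfold d, c in *; lra).
  assert (sin c <= sec (PI / INR n) * cos c) by nra.
  assert (0 <= 2 * sin d * (sec (PI / INR n) * cos c - sin c)) by (apply Rmult_le_pos; lra).
  nra.
Qed.

Lemma Gf_expand n m t : n = (4 * m + 2)%nat -> (1 <= m)%nat -> (0 <= t)%Z -> (t <= Z.of_nat (2 * m + 1))%Z ->
  Gf n (2 * m + 1) t = if Z.even t then cos (IZR t * PI / INR n) + sec (PI / INR n) * sin (IZR t * PI / INR n)
    else sec (PI / INR n) * cos (IZR t * PI / INR n) + sin (IZR t * PI / INR n).
Proof.
  intros Hnm Hm H0 H1. pose proof PI_RGT_0.
  assert (HN : INR n = 4 * INR m + 2) by (rewrite Hnm, plus_INR, mult_INR; simpl; ring).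
  assert (HNp : 0 < INR n) by (pose proof (pos_INR m); lra).
  assert (Hx : 0 <= IZR t * PI / INR n <= PI / 2).
  { assert (0 <= IZR t) by (apply IZR_le; auto).
    assert (IZR t <= 2 * INR m + 1).
    { apply IZR_le in H1. rewrite <- INR_IZR_INZ in H1. rewrite plus_INR, mult_INR in H1. simpl in H1. lra. }
    split. unfold Rdiv. apply Rmult_le_pos; [nra|left; apply Rinv_0_lt_compat; lra].
    apply Rmult_le_reg_r with (INR n); [lra|]. unfold Rdiv. rewrite Rmult_assoc, Rinv_l by lra.
    rewrite HN. nra. }
  assert (0 <= cos (IZR t * PI / INR n)) by (apply cos_ge_0; lra).
  assert (0 <= sin (IZR t * PI / INR n)) by (apply sin_ge_0; lra).
  unfold Gf. rewrite !Rabs_pos_eq by auto.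
  replace (t + Z.of_nat (2 * m + 1))%Z with (t + 1 + 2 * Z.of_nat m)%Z by lia. rewrite sg_shift2.
  unfold sg. rewrite Z.even_add. destruct (Z.even t); simpl; ring.
Qed.

Lemma Gmax_4m2 n m : n = (4 * m + 2)%nat -> (1 <= m)%nat ->
  forall t, Gf n (2 * m + 1) t <= Gf n (2 * m + 1) (Z.of_nat m).
Proof.
  intros Hnm Hm1 t. pose proof PI_RGT_0.
  assert (HN : INR n = 4 * INR m + 2) by (rewrite Hnm, plus_INR, mult_INR; simpl; ring).
  assert (HNp : 0 < INR n) by (pose proof (pos_INR m); lra).
  assert (Hn4 : (4 <= n)%nat) by lia.
  destruct (G_reduce n (2 * m + 1) t ltac:(lia) ltac:(lia)) as [t' [H0 [H1 ->]]].
  assert (Htm : (t' <= Z.of_nat m)%Z) by lia.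
  assert (Hxy : forall a b : Z, (0 <= a)%Z -> (a <= b)%Z -> (a + b <= 2 * Z.of_nat m)%Z ->
    0 <= IZR a * PI / INR n /\ IZR a * PI / INR n <= IZR b * PI / INR n /\
    IZR a * PI / INR n + IZR b * PI / INR n <= 2 * INR m * PI / INR n /\
    2 * INR m * PI / INR n <= PI / 2).
  { intros a b Ha Hab Hs.
    apply IZR_le in Ha. apply IZR_le in Hab. apply IZR_le in Hs.
    rewrite plus_IZR, mult_IZR, <- INR_IZR_INZ in Hs.
    assert (Hi : 0 < / INR n) by (apply Rinv_0_lt_compat; lra).
    unfold Rdiv. split; [|split; [|split]].
    - apply Rmult_le_pos; nra.
    - apply Rmult_le_compat_r; [lra|]. nra.
    - rewrite <- Rmult_plus_distr_r. apply Rmult_le_compat_r; [lra|]. nra.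
    - apply Rmult_le_reg_r with (INR n); [lra|]. rewrite Rmult_assoc, Rinv_l by lra.
      rewrite HN. pose proof (pos_INR m). nra. }
  destruct (Bool.bool_dec (Z.even t') (Z.even (Z.of_nat m))) as [Ep|Ep].
  - rewrite !Gf_expand with (m := m) by lia. rewrite Ep.
    destruct (Hxy t' (Z.of_nat m) H0 Htm ltac:(lia)) as [X1 [X2 [X3 X4]]].
    destruct (Z.even (Z.of_nat m)).
    + apply mono2; auto; lra.
    + apply (mono1 n m); auto.
  - assert (Htm1 : (t' <= Z.of_nat m - 1)%Z) by (destruct (Z.eq_dec t' (Z.of_nat m)); [subst; tauto|lia]).
    rewrite <- (G_refl n (2 * m + 1) (Z.of_nat m)) by lia.
    replace (Z.of_nat (2 * m + 1) - Z.of_nat m)%Z with (Z.of_nat m + 1)%Z by lia.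
    rewrite !Gf_expand with (m := m) by lia.
    assert (Ep' : Z.even t' = Z.even (Z.of_nat m + 1)).
    { rewrite Z.even_add. destruct (Z.even t'), (Z.even (Z.of_nat m)); simpl in *; congruence. }
    rewrite Ep'.
    destruct (Hxy t' (Z.of_nat m + 1)%Z H0 ltac:(lia) ltac:(lia)) as [X1 [X2 [X3 X4]]].
    destruct (Z.even (Z.of_nat m + 1)).
    + apply mono2; auto; lra.
    + apply (mono1 n m); auto.
Qed.


Lemma r_pos n : (4 <= n)%nat -> 0 < r_n n.
Proof.
  intros H. unfold r_n. apply sqrt_lt_R0. unfold sec. apply Rinv_0_lt_compat. apply cos_pos_n; auto.
Qed.

Definition wit n (sig th : R) : func3 := (sig * cos th / (2 * r_n n), sig * sin th / (2 * r_n n), / 2).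
Definition witc n (sig th : R) : func3 := (- (sig * cos th / (2 * r_n n)), - (sig * sin th / (2 * r_n n)), / 2).

Definition phi n j := 2 * INR j * PI / INR n.

Lemma app_wit n sig th j : (4 <= n)%nat ->
  app (wit n sig th) (vertex n j) = / 2 + sig / 2 * cos (phi n j - th).
Proof. intros H. pose proof (r_pos n H). unfold app, wit, vertex, phi. rewrite cos_minus. field. lra. Qed.

Lemma app_witc n sig th j : (4 <= n)%nat ->
  app (witc n sig th) (vertex n j) = / 2 - sig / 2 * cos (phi n j - th).
Proof. intros H. pose proof (r_pos n H). unfold app, witc, vertex, phi. rewrite cos_minus. field. lra. Qed.

Lemma dich_wit n sig th : (4 <= n)%nat ->
  (forall j, (1 <= j <= n)%nat -> Rabs (sig * cos (phi n j - th)) <= 1) ->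
  dichotomic n (wit n sig th, witc n sig th).
Proof.
  intros Hn H. unfold dichotomic; cbn [fst snd]. split; [|split].
  - apply effect_of_vertices. intros j Hj. rewrite app_wit by auto.
    pose proof (proj1 (Rabs_le_between _ _) (H j Hj)). lra.
  - apply effect_of_vertices. intros j Hj. rewrite app_witc by auto.
    pose proof (proj1 (Rabs_le_between _ _) (H j Hj)). lra.
  - unfold fadd, witc, wit, unit_eff. simpl. pose proof (r_pos n Hn). f_equal; [f_equal|]; field; lra.
Qed.

Lemma cos_odd_bound n h q : (4 <= n)%nat -> n = (2 * h)%nat -> Z.Odd q ->
  Rabs (cos (IZR q * PI / INR n)) <= cos (PI / INR n).
Proof.
  intros Hn Hnh Hq. assert (HN : 0 < INR n) by (pose proof (INR4 n Hn); lra).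
  pose proof PI_RGT_0.
  assert (Hnz : (0 < Z.of_nat n)%Z) by lia.
  pose proof (Z.div_mod q (Z.of_nat n) ltac:(lia)) as Hd.
  pose proof (Z.mod_pos_bound q (Z.of_nat n) Hnz) as Hb.
  set (k := (q / Z.of_nat n)%Z) in *. set (q0 := (q mod Z.of_nat n)%Z) in *.
  replace (IZR q * PI / INR n) with (IZR q0 * PI / INR n + IZR k * PI)
    by (rewrite Hd; rewrite plus_IZR, mult_IZR, <- INR_IZR_INZ; field; lra).
  rewrite abs_cos_kpi.
  assert (Hq0 : (1 <= q0 <= Z.of_nat n - 1)%Z).
  { destruct (Z.eq_dec q0 0) as [E|E]; [|lia]. exfalso.
    destruct Hq as [a Ha]. rewrite E in Hd. lia. }
  assert (A1 : 1 <= IZR q0) by (apply IZR_le; lia).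
  assert (A2 : IZR q0 <= INR n - 1) by (rewrite INR_IZR_INZ; replace 1 with (IZR 1) by reflexivity; rewrite <- minus_IZR; apply IZR_le; lia).
  assert (B1 : PI / INR n <= IZR q0 * PI / INR n).
  { unfold Rdiv. apply Rmult_le_compat_r; [left; apply Rinv_0_lt_compat; lra|]. nra. }
  assert (B2 : IZR q0 * PI / INR n <= PI - PI / INR n).
  { apply Rmult_le_reg_r with (INR n); auto. unfold Rdiv.
    replace ((PI - PI * / INR n) * INR n) with (PI * (INR n - 1)) by (field; lra).
    rewrite Rmult_assoc, Rinv_l by lra. nra. }
  pose proof (PIn_bounds n Hn).
  apply Rabs_le. split.
  - pose proof (Rtrigo_facts.cos_pi_minus (IZR q0 * PI / INR n)).
    assert (cos (PI - IZR q0 * PI / INR n) <= cos (PI / INR n)) by (apply cos_decr_1; lra). lra.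
  - apply cos_decr_1; lra.
Qed.

Lemma fadd_eff_bound n x y : is_effect n x -> is_effect n y ->
  forall s, inS n s -> Rabs (app (fadd x y) s) <= 2.
Proof.
  intros Hx Hy s Hs. rewrite app_fadd. pose proof (Hx s Hs). pose proof (Hy s Hs).
  rewrite Rabs_pos_eq; lra.
Qed.

Lemma lower_gen n h i s1 t1 s2 t2 : (4 <= n)%nat -> n = (2 * h)%nat -> (1 <= i <= h)%nat ->
  dichotomic n (wit n s1 t1, witc n s1 t1) -> dichotomic n (wit n s2 t2, witc n s2 t2) ->
  / 8 * (4 + s1 * (cos (phi n i - t1) + cos t1) + s2 * (cos (phi n i - t2) - cos t2))
  <= Pbar n (wit n s1 t1, witc n s1 t1) (wit n s2 t2, witc n s2 t2).
Proof.
  intros Hn Hnh Hi D1 D2.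
  assert (HN : 0 < INR n) by (pose proof (INR4 n Hn); lra).
  assert (Hh : INR n = 2 * INR h) by (rewrite Hnh, mult_INR; simpl; ring).
  destruct D1 as [E1 [E1' _]], D2 as [E2 [E2' _]]. simpl in E1, E1', E2, E2'.
  unfold Pbar; simpl fst; simpl snd.
  assert (Va : inS n (vertex n i)) by (apply vertex_inS; lia).
  assert (Vb : inS n (vertex n n)) by (apply vertex_inS; lia).
  assert (Vc : inS n (vertex n h)) by (apply vertex_inS; lia).
  assert (Vd : inS n (vertex n (i + h))) by (apply vertex_inS; lia).
  pose proof (fnorm_ge n _ 2 _ (fadd_eff_bound n _ _ E1 E2) Va) as X1.
  pose proof (fnorm_ge n _ 2 _ (fadd_eff_bound n _ _ E1 E2') Vb) as X2.
  pose proof (fnorm_ge n _ 2 _ (fadd_eff_bound n _ _ E1' E2) Vc) as X3.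
  pose proof (fnorm_ge n _ 2 _ (fadd_eff_bound n _ _ E1' E2') Vd) as X4.
  rewrite app_fadd in X1, X2, X3, X4.
  rewrite app_wit, app_wit in X1 by auto. rewrite app_wit, app_witc in X2 by auto.
  rewrite app_witc, app_wit in X3 by auto. rewrite app_witc, app_witc in X4 by auto.
  assert (Pn : forall t, cos (phi n n - t) = cos t).
  { intros t. unfold phi. replace (2 * INR n * PI / INR n - t) with (- t + 2 * IZR 1 * PI) by (simpl; field; lra).
    rewrite cos_2kpi, cos_neg. auto. }
  assert (Ph : forall t, cos (phi n h - t) = - cos t).
  { intros t. unfold phi. replace (2 * INR h * PI / INR n - t) with (PI - t) by (rewrite Hh; field; lra).
    apply Rtrigo_facts.cos_pi_minus. }
  assert (Pih : forall t, cos (phi n (i + h) - t) = - cos (phi n i - t)).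
  { intros t. unfold phi. rewrite plus_INR.
    replace (2 * (INR i + INR h) * PI / INR n - t) with ((2 * INR i * PI / INR n - t) + PI) by (rewrite Hh; field; lra).
    apply neg_cos. }
  rewrite !Pn in X2. rewrite !Ph in X3. rewrite !Pih in X4.
  pose proof (Rle_abs (/ 2 + s1 / 2 * cos (phi n i - t1) + (/ 2 + s2 / 2 * cos (phi n i - t2)))).
  pose proof (Rle_abs (/ 2 + s1 / 2 * cos t1 + (/ 2 - s2 / 2 * cos t2))).
  pose proof (Rle_abs (/ 2 - s1 / 2 * - cos t1 + (/ 2 + s2 / 2 * - cos t2))).
  pose proof (Rle_abs (/ 2 - s1 / 2 * - cos (phi n i - t1) + (/ 2 - s2 / 2 * - cos (phi n i - t2)))).
  lra.
Qed.


Lemma finish n h Gmax T M1 M2 : (4 <= n)%nat -> n = (2 * h)%nat -> (forall t, Gf n h t <= Gmax) ->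
  T = / 2 + Gmax / 4 -> dichotomic n M1 -> dichotomic n M2 -> T <= Pbar n M1 M2 -> is_Pbar_max n T.
Proof.
  intros Hn Hnh HG HT D1 D2 HL. split.
  - exists M1, M2. split; [auto|split; [auto|]]. apply Rle_antisym; auto.
    rewrite HT. apply (upper n h); auto.
  - intros M1' M2' D1' D2'. rewrite HT. apply (upper n h); auto.
Qed.

Lemma kindA n th j : Rabs (1 * cos (phi n j - th)) <= 1.
Proof. rewrite Rmult_1_l. apply Rabs_le. apply COS_bound. Qed.

Lemma kindB n h q0 : (4 <= n)%nat -> n = (2 * h)%nat -> Z.Odd q0 -> forall j,
  Rabs (sec (PI / INR n) * cos (phi n j - IZR q0 * PI / INR n)) <= 1.
Proof.
  intros Hn Hnh Hq j. assert (HN : 0 < INR n) by (pose proof (INR4 n Hn); lra).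
  replace (phi n j - IZR q0 * PI / INR n) with (IZR (2 * Z.of_nat j - q0) * PI / INR n)
    by (unfold phi; rewrite minus_IZR, mult_IZR, <- INR_IZR_INZ; simpl; field; lra).
  assert (Z.Odd (2 * Z.of_nat j - q0)) by (destruct Hq as [a Ha]; exists (Z.of_nat j - a - 1)%Z; lia).
  pose proof (cos_odd_bound n h _ Hn Hnh H). pose proof (cos_pos_n n Hn).
  rewrite Rabs_mult, Rabs_pos_eq by (unfold sec; left; apply Rinv_0_lt_compat; auto).
  unfold sec. apply Rmult_le_reg_l with (cos (PI / INR n)); auto.
  rewrite <- Rmult_assoc, Rinv_r by lra. lra.
Qed.

Lemma half_id a : / 2 * (1 + a / sqrt 2) = / 2 + sqrt 2 * a / 4.
Proof.
  pose proof (sqrt_sqrt 2 ltac:(lra)). pose proof (sqrt_lt_R0 2 ltac:(lra)).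
  replace (a / sqrt 2) with (sqrt 2 * a / 2). field.
  field_simplify_eq; [|lra]. rewrite <- Rsqr_pow2, Rsqr_sqrt by lra. ring.
Qed.

Lemma sqrt2_eq : sqrt 2 = 2 / sqrt 2.
Proof.
  pose proof (sqrt_sqrt 2 ltac:(lra)). pose proof (sqrt_lt_R0 2 ltac:(lra)).
  apply Rmult_eq_reg_r with (sqrt 2); [|lra]. unfold Rdiv. rewrite Rmult_assoc, Rinv_l by lra. lra.
Qed.

Lemma Zodd_nat m : Nat.Odd m -> Z.Odd (Z.of_nat m).
Proof. intros [k Hk]. exists (Z.of_nat k). lia. Qed.

Lemma Zeven_false m : Nat.Odd m -> Z.even (Z.of_nat m) = false.
Proof. intros [k Hk]. replace (Z.of_nat m) with (2 * Z.of_nat k + 1)%Z by lia. apply Z.even_odd. Qed.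

Lemma Zeven_true m : Nat.Even m -> Z.even (Z.of_nat m) = true.
Proof. intros [k Hk]. replace (Z.of_nat m) with (2 * Z.of_nat k)%Z by lia. rewrite Z.even_mul. reflexivity. Qed.

Lemma cos_PI2_plus x : cos (PI / 2 + x) = - sin x.
Proof. rewrite cos_plus, cos_PI2, sin_PI2. ring. Qed.

Lemma cos_minus_PI2 x : cos (x - PI / 2) = sin x.
Proof. replace (x - PI / 2) with (- (PI / 2 - x)) by ring. rewrite cos_neg. apply cos_shift. Qed.

Theorem mainTheorem15 (n : nat) (Hev : Nat.Even n) (H4 : (4 <= n)%nat) :
  forall m : nat, (1 <= m)%nat ->
  (n = (4 * m)%nat -> Nat.Odd m ->
     is_Pbar_max n (/ 2 * (1 + sec (PI / INR n) / sqrt 2))) /\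
  (n = (4 * m)%nat -> Nat.Even m ->
     is_Pbar_max n (/ 2 * (1 + 1 / sqrt 2))) /\
  (n = (4 * m + 2)%nat -> Nat.Odd m ->
     is_Pbar_max n (/ 4 * (2 + sec (PI / INR n) * cos (INR m * PI / INR n)
                              + sin (INR m * PI / INR n)))) /\
  (n = (4 * m + 2)%nat -> Nat.Even m ->
     is_Pbar_max n (/ 4 * (2 + cos (INR m * PI / INR n)
                              + sec (PI / INR n) * sin (INR m * PI / INR n)))).
Proof.
  intros m Hm. pose proof PI_RGT_0 as Hpi.
  assert (HNp : 0 < INR n) by (pose proof (INR4 n H4); lra).
  assert (Hmp : 0 < INR m) by (apply lt_0_INR; lia).
  pose proof (sqrt_lt_R0 2 ltac:(lra)) as Hs2.
  pose proof (sqrt_sqrt 2 ltac:(lra)) as Hs22.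
  assert (Hc4 : cos (PI / 4) = / sqrt 2) by (rewrite cos_PI4; field; lra).
  assert (Hs4 : sin (PI / 4) = / sqrt 2) by (rewrite sin_PI4; field; lra).
  set (s := sec (PI / INR n)).
  split; [|split; [|split]]; intros Hnm Hpar.
  -
    assert (HN : INR n = 4 * INR m) by (rewrite Hnm, mult_INR; simpl; ring).
    assert (Eq1 : PI / 4 = IZR (Z.of_nat m) * PI / INR n) by (rewrite <- INR_IZR_INZ, HN; field; lra).
    assert (Eq2 : 3 * PI / 4 = IZR (Z.of_nat (3 * m)) * PI / INR n)
      by (rewrite <- INR_IZR_INZ, mult_INR, HN; simpl; field; lra).
    assert (D1 : dichotomic n (wit n s (PI / 4), witc n s (PI / 4))).
    { apply dich_wit; auto. intros j _. rewrite Eq1. apply (kindB n (2 * m)); auto. lia. apply Zodd_nat; auto. }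
    assert (D2 : dichotomic n (wit n s (3 * PI / 4), witc n s (3 * PI / 4))).
    { apply dich_wit; auto. intros j _. rewrite Eq2. apply (kindB n (2 * m)); auto. lia.
      apply Zodd_nat. destruct Hpar as [k Hk]. exists (3 * k + 1)%nat. lia. }
    apply (finish n (2 * m) (sqrt 2 * s) _ _ _ H4 ltac:(lia) (Gmax_4m_odd n m Hnm Hpar Hm) (half_id s) D1 D2).
    eapply Rle_trans; [|apply (lower_gen n (2 * m) m); auto; lia].
    replace (phi n m) with (PI / 2) by (unfold phi; rewrite HN; field; lra).
    replace (PI / 2 - 3 * PI / 4) with (- (PI / 4)) by field. rewrite cos_neg.
    replace (3 * PI / 4) with (PI - PI / 4) by field. rewrite Rtrigo_facts.cos_pi_minus.
    rewrite cos_shift. rewrite Hc4, Hs4. right. field. lra.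
  -
    assert (HN : INR n = 4 * INR m) by (rewrite Hnm, mult_INR; simpl; ring).
    apply (finish n (2 * m) (sqrt 2) _ (wit n 1 (PI / 4), witc n 1 (PI / 4))
                                       (wit n 1 (3 * PI / 4), witc n 1 (3 * PI / 4))); auto.
    + lia.
    + apply Gmax_4m_even; auto.
    + rewrite half_id. field.
    + apply dich_wit; auto. intros j _. apply kindA.
    + apply dich_wit; auto. intros j _. apply kindA.
    + eapply Rle_trans; [|apply (lower_gen n (2 * m) m); auto; try lia; apply dich_wit; auto; intros; apply kindA].
      replace (phi n m) with (PI / 2) by (unfold phi; rewrite HN; field; lra).
      replace (PI / 2 - 3 * PI / 4) with (- (PI / 4)) by field. rewrite cos_neg.
      replace (3 * PI / 4) with (PI - PI / 4) by field. rewrite Rtrigo_facts.cos_pi_minus.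
      rewrite cos_shift. rewrite Hc4, Hs4. right. field. lra.
  -
    assert (HN : INR n = 4 * INR m + 2) by (rewrite Hnm, plus_INR, mult_INR; simpl; ring).
    set (x := INR m * PI / INR n).
    assert (Eq1 : x = IZR (Z.of_nat m) * PI / INR n) by (unfold x; rewrite <- INR_IZR_INZ; reflexivity).
    apply (finish n (2 * m + 1) (Gf n (2 * m + 1) (Z.of_nat m)) _ (wit n s x, witc n s x)
                                (wit n 1 (PI / 2 + x), witc n 1 (PI / 2 + x))); auto.
    + lia.
    + apply Gmax_4m2; auto.
    + rewrite Gf_expand with (m := m) by lia. rewrite Zeven_false by auto. rewrite <- Eq1. fold s. field.
    + apply dich_wit; auto. intros j _. rewrite Eq1. apply (kindB n (2 * m + 1)); auto. lia. apply Zodd_nat; auto.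
    + apply dich_wit; auto. intros j _. apply kindA.
    + eapply Rle_trans; [|apply (lower_gen n (2 * m + 1) m); auto; try lia].
      2: apply dich_wit; auto; intros j _; rewrite Eq1; apply (kindB n (2 * m + 1)); auto; try lia; apply Zodd_nat; auto.
      2: apply dich_wit; auto; intros; apply kindA.
      replace (phi n m - x) with x by (unfold phi, x; field; lra).
      replace (phi n m - (PI / 2 + x)) with (x - PI / 2) by (unfold phi, x; field; lra).
      rewrite cos_minus_PI2, cos_PI2_plus. right. field.
  -
    assert (HN : INR n = 4 * INR m + 2) by (rewrite Hnm, plus_INR, mult_INR; simpl; ring).
    set (x := INR m * PI / INR n).
    assert (Eq1 : x = IZR (Z.of_nat m) * PI / INR n) by (unfold x; rewrite <- INR_IZR_INZ; reflexivity).
    assert (Eq2 : PI / 2 + x = IZR (Z.of_nat (3 * m + 1)) * PI / INR n)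
      by (unfold x; rewrite <- INR_IZR_INZ, plus_INR, mult_INR; simpl; rewrite HN; field; lra).
    assert (Hodd : Z.Odd (Z.of_nat (3 * m + 1))).
    { destruct Hpar as [k Hk]. exists (3 * Z.of_nat k)%Z. lia. }
    apply (finish n (2 * m + 1) (Gf n (2 * m + 1) (Z.of_nat m)) _ (wit n 1 x, witc n 1 x)
                                (wit n s (PI / 2 + x), witc n s (PI / 2 + x))); auto.
    + lia.
    + apply Gmax_4m2; auto.
    + rewrite Gf_expand with (m := m) by lia. rewrite Zeven_true by auto. rewrite <- Eq1. fold s. field.
    + apply dich_wit; auto. intros j _. apply kindA.
    + apply dich_wit; auto. intros j _. rewrite Eq2. apply (kindB n (2 * m + 1)); auto. lia.
    + eapply Rle_trans; [|apply (lower_gen n (2 * m + 1) m); auto; try lia].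
      2: apply dich_wit; auto; intros; apply kindA.
      2: apply dich_wit; auto; intros j _; rewrite Eq2; apply (kindB n (2 * m + 1)); auto; lia.
      replace (phi n m - x) with x by (unfold phi, x; field; lra).
      replace (phi n m - (PI / 2 + x)) with (x - PI / 2) by (unfold phi, x; field; lra).
      rewrite cos_minus_PI2, cos_PI2_plus. right. field.
Qed.
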